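(* Let $\{F_n\}_{n\geq 0}$ be a sequence of positive integers with $F_0=1$, let $\Pi$ be the cobweb poset it determines, and for $n\geq 0$ let $P_n$ be the finite cobweb subposet of rank $n$. The characteristic polynomial of $P_n$, $\chi_{P_n}(t)=\sum_{x\in P_n}\mu(0,x)\,t^{n-r(x)}$, is given by $$\chi_{P_n}(t)=t^n+\sum_{k=1}^{n}(-1)^kF_k\prod_{i=1}^{k-1}(F_i-1)\,t^{n-k}.$$
   Context: Cobweb poset: given the sequence $\{F_n\}_{n\ge 0}$, for $s\geq 0$ let the $s$-th level be $\Phi_s=\{\langle j,s\rangle : 1\leq j\leq F_s\}$, and let $V=\bigcup_{s\geq 0}\Phi_s$. The cobweb poset is $\Pi=(V,\leq)$ where for $x=\langle s,t\rangle$, $y=\langle u,v\rangle$ one has $x\leq y$ iff ($t<v$) or ($t=v$ and $s=u$). Its rank function is $r(x)=s$ for $x\in\Phi_s$. For $n\geq 0$, $P_n$ is the set $\bigcup_{0\leq s\leq n}\Phi_s$ with the induced order; it has unique minimal element $0=\langle 1,0\rangle$ and length $n$. $\mu$ denotes the M\''obius function of $P_n$. Empty products equal $1$. *)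

(* Defs.v *)
From mathcomp Require Import all_boot all_order all_algebra.
Set Implicit Arguments. Unset Strict Implicit. Unset Printing Implicit Defensive.
Import GRing.Theory Num.Theory.
Local Open Scope ring_scope.

(* The finite cobweb subposet P_n.  An element [Tagged _ j : cobweb F n]
   with tag s : 'I_n.+1 and j : 'I_(F s) represents <j+1, s> in Phi_s. *)
Definition cobweb (F : nat -> nat) (n : nat) : finType :=
  {s : 'I_n.+1 & 'I_(F s)}.

Definition crank (F : nat -> nat) (n : nat) (x : cobweb F n) : nat := tag x.

Definition cle (F : nat -> nat) (n : nat) : rel (cobweb F n) :=
  fun x y => (crank x < crank y)%N || (x == y).

(* The fuel k bounds the recursion depth; #|T| is always enough. *)
Fixpoint mobius_fuel (T : finType) (le : rel T) (k : nat) (x y : T) : int :=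
  match k with
  | 0 => 0
  | k'.+1 =>
    if x == y then 1
    else if le x y then
      - \sum_(z : T | le x z && le z y && (z != y)) mobius_fuel le k' x z
    else 0
  end.

Definition mobius (T : finType) (le : rel T) (x y : T) : int :=
  mobius_fuel le #|T| x y.

(* characteristic polynomial chi_{P_n}(t) = sum_x mu(0,x) t^(n - r(x)),
   where z0 is the minimal element 0 = <1,0> *)
Definition cobweb_charpoly (F : nat -> nat) (n : nat) (z0 : cobweb F n)
  : {poly int} :=
  \sum_(x : cobweb F n) (mobius (@cle F n) z0 x)%:P * 'X^(n - crank x).

(* Main.v *)
Require Import Defs.
From mathcomp Require Import all_boot all_order all_algebra.
From mathcomp Require Import ring.
Import GRing.Theory Num.Theory.
Local Open Scope ring_scope.

Lemma sum_levels (V : nmodType) (F : nat -> nat) n (G : nat -> V) :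
  \sum_(x : cobweb F n) G (crank x) = \sum_(s < n.+1) G s *+ F s.
Proof.
have := (@sig_big_dep V 0 +%R 'I_n.+1 (fun s => 'I_(F s)) xpredT (fun _ => xpredT)
   (fun i _ => G i)).
rewrite /= => E.
rewrite /crank /cobweb -[LHS]/(\sum_(p : {i : 'I_n.+1 & 'I_(F i)} | true && true) G (tag p)).
rewrite -E; apply: eq_bigr => s _.
by rewrite sumr_const card_ord.
Qed.

Definition mval (F : nat -> nat) (s : nat) : int :=
  (-1) ^+ s * \prod_(1 <= i < s) ((F i)%:Z - 1).

Lemma mval_rec (F : nat -> nat) (hF0 : F 0%N = 1%N) s :
  \sum_(t < s.+1) mval F t *+ F t = - mval F s.+1.
Proof.
elim: s => [|s IH].
  by rewrite big_ord1 /mval hF0 !big_geq.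
rewrite big_ord_recr /= IH /mval.
rewrite [in RHS]big_nat_recr //= exprS.
rewrite -mulr_natr.
rewrite !exprS.
ring.
Qed.

Lemma zero_unique F n (hF0 : F 0%N = 1%N) (x y : cobweb F n) :
  crank x = 0%N -> crank y = 0%N -> x = y.
Proof.
case: x => [s j]; case: y => [t k]; rewrite /crank /= => Hs Ht.
have Est : s = t by apply: val_inj; rewrite /= Hs Ht.
subst t.
have Ejk : j = k.
  apply: val_inj.
  have H1 : F s = 1%N by rewrite Hs.
  have Hj := ltn_ord j; have Hk := ltn_ord k.
  have Hj' : (val j < 1)%N by apply: leq_trans Hj _; rewrite H1.
  have Hk' : (val k < 1)%N by apply: leq_trans Hk _; rewrite H1.
  by move: Hj' Hk'; rewrite !ltnS !leqn0 => /eqP-> /eqP->.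
by rewrite Ejk.
Qed.

Lemma mob_fuel F n (hF0 : F 0%N = 1%N) (z0 : cobweb F n) (hz0 : crank z0 = 0%N) k :
  forall y, (crank y < k)%N -> mobius_fuel (@cle F n) k z0 y = mval F (crank y).
Proof.
elim: k => [//|k IH] y Hy /=.
case: eqP => [<-|Hne].
  by rewrite hz0 /mval big_geq.
have Hyr : (0 < crank y)%N.
  rewrite lt0n; apply/eqP => H; apply: Hne; exact: zero_unique.
have -> : cle z0 y by rewrite /cle hz0 Hyr.
rewrite (eq_bigl (fun z => (crank z < crank y)%N)); last first.
  move=> z; rewrite /cle hz0.
  case: (boolP (crank z < crank y)%N) => Hz.
    rewrite /=; have -> : z != y.
      by apply/eqP => E; move: Hz; rewrite E ltnn.
    rewrite andbT; case: (ltnP 0 (crank z)) => [//|H0].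
    have H0' : crank z = 0%N by apply/eqP; rewrite -leqn0.
    by rewrite (@zero_unique F n hF0 _ _ H0' hz0) eqxx orbT.
  by rewrite /=; case: (z =P y) => //; rewrite andbF.
rewrite (eq_bigr (fun z => mval F (crank z))); last first.
  move=> z Hz; apply: IH; exact: leq_trans Hz Hy.
rewrite big_mkcond /=.
rewrite (@sum_levels _ F n (fun s => if (s < crank y)%N then mval F s else 0)).
have Hyn : (crank y <= n.+1)%N by apply: ltnW; exact: ltn_ord.
rewrite (eq_bigr (fun s : 'I_n.+1 => if (s < crank y)%N then mval F s *+ F s else 0)); last first.
  by move=> s _; case: ifP; rewrite ?mul0rn.
rewrite -big_mkcond /=.
rewrite -(big_ord_widen _ (fun s => mval F s *+ F s) Hyn).
case Ec: (crank y) Hyr => [//|c] _.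
by rewrite mval_rec // opprK.
Qed.

Theorem mainTheorem2 (F : nat -> nat) (hpos : forall m, (0 < F m)%N)
  (hF0 : F 0%N = 1%N) (n : nat) (z0 : cobweb F n) (hz0 : crank z0 = 0%N) :
  cobweb_charpoly z0 =
  'X^n + \sum_(1 <= k < n.+1)
           ((-1) ^+ k * (F k)%:Z * \prod_(1 <= i < k) ((F i)%:Z - 1))%:P
           * 'X^(n - k).
Proof.
have Hcard : (n.+1 <= #|cobweb F n|)%N.
  pose f := fun s : 'I_n.+1 => (Tagged (fun i : 'I_n.+1 => 'I_(F i)) (Ordinal (hpos s)) : cobweb F n).
  have finj : injective f by move=> a b /(congr1 tag).
  by have := leq_card f finj; rewrite card_ord.
rewrite /cobweb_charpoly.
rewrite (eq_bigr (fun x => (mval F (crank x))%:P * 'X^(n - crank x))); last first.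
  move=> x _; rewrite /mobius (@mob_fuel F n hF0 z0 hz0) //.
  by apply: leq_trans Hcard; rewrite ltnS -ltnS; exact: ltn_ord.
rewrite (@sum_levels _ F n (fun s => (mval F s)%:P * 'X^(n - s))).
rewrite big_ord_recl /= /mval big_geq // hF0 subn0 expr0 !mul1r mulr1n.
congr (_ + _).
rewrite big_add1 /= big_mkord; apply: eq_bigr => i _.
rewrite /bump /= add1n -mulrnAl -polyCMn; congr (_%:P * _).
rewrite -mulr_natr.
have -> : (F i.+1)%:R = (F i.+1)%:Z :> int by rewrite natz.
ring.
Qed.
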